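(* Consider the following schemata and rule over QHC: (D$_\nabla$) $\nabla\alpha\lor\neg\nabla\alpha$ for all problems $\alpha$ (decidability of all problems of the form $\nabla\alpha$); (WEM) $\neg\alpha\lor\neg\neg\alpha$ for all problems $\alpha$; (D$_{\rm prop}$) $!p\lor !\neg p$ for all propositions $p$ (decidability of all propositions); the Exclusive Disjunction Rule (EDR): from $\neg(\alpha\land\beta)$ infer $\nabla(\alpha\lor\beta)\to\nabla\alpha\lor\nabla\beta$, for all problems $\alpha,\beta$. Then, over QHC: (a) (D$_\nabla$) implies (WEM); (b) (WEM) implies that (EDR) is derivable; (c) (D$_\nabla$) is equivalent to the conjunction of Hilbert's No Ignorabimus Principle and (EDR); (d) (D$_{\rm prop}$) is equivalent to the conjunction of Kolmogorov's Stability Principle and (EDR).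
   Context: QHC is a two-sorted first-order calculus. Its only terms are individual variables. Every formula is either a problem (denoted by Greek letters $\alpha,\beta,\gamma,\dots$) or a proposition (denoted by Latin letters $p,q,\dots$). Atomic formulas are proposition variables $p(t_1,\dots,t_n)$ (of proposition type), problem variables $\pi(t_1,\dots,t_n)$ (of problem type), and the constants $0$ (a proposition, classical falsity) and $\bot$ (a problem, intuitionistic absurdity). Propositions are closed under the classical connectives $\land,\lor,\to$ and quantifiers $\exists,\forall$; problems are closed under the intuitionistic connectives $\land,\lor,\to$ and quantifiers $\exists,\forall$ (the same symbols are used, distinguished by the type of the arguments). $\neg p$ abbreviates $p\to 0$, $\neg\alpha$ abbreviates $\alpha\to\bot$, and $\leftrightarrow$ is defined as usual. There are two type-conversion operators: if $p$ is a proposition then $!p$ is a problem, and if $\alpha$ is a problem then $?\alpha$ is a proposition. Deductive system of QHC: all axioms and rules of classical predicate logic applied to all propositions; all postulates and rules of intuitionistic predicate logic applied to all problems; the rules $p\,/\,!p$ and $\alpha\,/\,?\alpha$; and the schemas $?!p\to p$; $\alpha\to\, !?\alpha$; $!(p\to q)\to(!p\to !q)$; $?(\alpha\to\beta)\to(?\alpha\to ?\beta)$; $!0\to\bot$; $?(\alpha\land\beta)\leftrightarrow ?\alpha\land ?\beta$; $?(\alpha\lor\beta)\leftrightarrow ?\alpha\lor ?\beta$; $?\bot\to 0$; $?\exists x\,\alpha(x)\leftrightarrow\exists x\,?\alpha(x)$; $?\forall x\,\alpha(x)\to\forall x\,?\alpha(x)$ (usual variable side conditions implicit). $\vdash A$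 means $A$ is derivable in QHC; $A\Rightarrow B$ means $\vdash A\to B$ and $A\Leftrightarrow B$ means $\vdash A\leftrightarrow B$ (with $A,B$ of the same type); $A\vdash B$ means $B$ is derivable in QHC from the premise $A$. Notation: $\Box p := ?!p$ (a proposition) and $\nabla\alpha := !?\alpha$ (a problem). QC and QH denote classical and intuitionistic predicate calculus. Hilbert's No Ignorabimus Principle is the schema $?(\gamma\lor\neg\gamma)$ for all problems $\gamma$. Kolmogorov's Stability Principle is the schema $\neg !\neg p\to !p$ for all propositions $p$. ''Over QHC, X implies Y'' means that after adding X (schema or rule) to QHC, Y (all its instances, resp. the rule) becomes derivable. *)

(* Defs.v *)
From Stdlib Require Import List Arith.
Import ListNotations.

(* Individual variables (the only terms) are natural numbers. *)
Definition var := nat.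

Inductive prp : Type :=
  | PVar  : nat -> list var -> prp
  | PZero : prp
  | PAnd  : prp -> prp -> prp
  | POr   : prp -> prp -> prp
  | PImp  : prp -> prp -> prp
  | PEx   : var -> prp -> prp
  | PAll  : var -> prp -> prp
  | PQ    : prb -> prp                   (* ?alpha *)
with prb : Type :=
  | BVar  : nat -> list var -> prb
  | BBot  : prb
  | BAnd  : prb -> prb -> prb
  | BOr   : prb -> prb -> prb
  | BImp  : prb -> prb -> prb
  | BEx   : var -> prb -> prb
  | BAll  : var -> prb -> prb
  | BBang : prp -> prb.                  (* !p *)

Inductive fm : Type :=
  | FP : prp -> fm
  | FB : prb -> fm.

Definition PNeg (p : prp) : prp := PImp p PZero.
Definition BNeg (a : prb) : prb := BImp a BBot.
Definition PIff (p q : prp) : prp := PAnd (PImp p q) (PImp q p).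
Definition BIff (a b : prb) : prb := BAnd (BImp a b) (BImp b a).
Definition Box (p : prp) : prp := PQ (BBang p).
Definition Nab (a : prb) : prb := BBang (PQ a).

Fixpoint freeP (x : var) (p : prp) : Prop :=
  match p with
  | PVar _ l => In x l
  | PZero => False
  | PAnd p q | POr p q | PImp p q => freeP x p \/ freeP x q
  | PEx z p | PAll z p => z <> x /\ freeP x p
  | PQ a => freeB x a
  end
with freeB (x : var) (a : prb) : Prop :=
  match a with
  | BVar _ l => In x l
  | BBot => False
  | BAnd a b | BOr a b | BImp a b => freeB x a \/ freeB x b
  | BEx z a | BAll z a => z <> x /\ freeB x a
  | BBang p => freeP x p
  end.

Definition rn (x y v : var) : var := if Nat.eqb v x then y else v.

Fixpoint substP (x y : var) (p : prp) : prp :=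
  match p with
  | PVar n l => PVar n (map (rn x y) l)
  | PZero => PZero
  | PAnd p q => PAnd (substP x y p) (substP x y q)
  | POr p q => POr (substP x y p) (substP x y q)
  | PImp p q => PImp (substP x y p) (substP x y q)
  | PEx z p => if Nat.eqb z x then PEx z p else PEx z (substP x y p)
  | PAll z p => if Nat.eqb z x then PAll z p else PAll z (substP x y p)
  | PQ a => PQ (substB x y a)
  end
with substB (x y : var) (a : prb) : prb :=
  match a with
  | BVar n l => BVar n (map (rn x y) l)
  | BBot => BBot
  | BAnd a b => BAnd (substB x y a) (substB x y b)
  | BOr a b => BOr (substB x y a) (substB x y b)
  | BImp a b => BImp (substB x y a) (substB x y b)
  | BEx z a => if Nat.eqb z x then BEx z a else BEx z (substB x y a)
  | BAll z a => if Nat.eqb z x then BAll z a else BAll z (substB x y a)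
  | BBang p => BBang (substP x y p)
  end.

(* y is free for (substitutable for) x: no capture. *)
Fixpoint sfP (x y : var) (p : prp) : Prop :=
  match p with
  | PVar _ _ | PZero => True
  | PAnd p q | POr p q | PImp p q => sfP x y p /\ sfP x y q
  | PEx z p | PAll z p => ~ (z <> x /\ freeP x p) \/ (z <> y /\ sfP x y p)
  | PQ a => sfB x y a
  end
with sfB (x y : var) (a : prb) : Prop :=
  match a with
  | BVar _ _ | BBot => True
  | BAnd a b | BOr a b | BImp a b => sfB x y a /\ sfB x y b
  | BEx z a | BAll z a => ~ (z <> x /\ freeB x a) \/ (z <> y /\ sfB x y a)
  | BBang p => sfP x y p
  end.

Inductive QHC_axiom : fm -> Prop :=
  | AP1 p q : QHC_axiom (FP (PImp p (PImp q p)))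
  | AP2 p q r : QHC_axiom (FP (PImp (PImp p (PImp q r)) (PImp (PImp p q) (PImp p r))))
  | AP3 p q : QHC_axiom (FP (PImp (PAnd p q) p))
  | AP4 p q : QHC_axiom (FP (PImp (PAnd p q) q))
  | AP5 p q : QHC_axiom (FP (PImp p (PImp q (PAnd p q))))
  | AP6 p q : QHC_axiom (FP (PImp p (POr p q)))
  | AP7 p q : QHC_axiom (FP (PImp q (POr p q)))
  | AP8 p q r : QHC_axiom (FP (PImp (PImp p r) (PImp (PImp q r) (PImp (POr p q) r))))
  | AP9 p : QHC_axiom (FP (PImp PZero p))
  | APDN p : QHC_axiom (FP (PImp (PNeg (PNeg p)) p))
  | APQ1 x y p : sfP x y p -> QHC_axiom (FP (PImp (PAll x p) (substP x y p)))
  | APQ2 x y p : sfP x y p -> QHC_axiom (FP (PImp (substP x y p) (PEx x p)))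
  | APQ3 x p q : ~ freeP x q -> QHC_axiom (FP (PImp (PAll x (PImp q p)) (PImp q (PAll x p))))
  | APQ4 x p q : ~ freeP x q -> QHC_axiom (FP (PImp (PAll x (PImp p q)) (PImp (PEx x p) q)))
  | AB1 a b : QHC_axiom (FB (BImp a (BImp b a)))
  | AB2 a b c : QHC_axiom (FB (BImp (BImp a (BImp b c)) (BImp (BImp a b) (BImp a c))))
  | AB3 a b : QHC_axiom (FB (BImp (BAnd a b) a))
  | AB4 a b : QHC_axiom (FB (BImp (BAnd a b) b))
  | AB5 a b : QHC_axiom (FB (BImp a (BImp b (BAnd a b))))
  | AB6 a b : QHC_axiom (FB (BImp a (BOr a b)))
  | AB7 a b : QHC_axiom (FB (BImp b (BOr a b)))
  | AB8 a b c : QHC_axiom (FB (BImp (BImp a c) (BImp (BImp b c) (BImp (BOr a b) c))))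
  | AB9 a : QHC_axiom (FB (BImp BBot a))
  | ABQ1 x y a : sfB x y a -> QHC_axiom (FB (BImp (BAll x a) (substB x y a)))
  | ABQ2 x y a : sfB x y a -> QHC_axiom (FB (BImp (substB x y a) (BEx x a)))
  | ABQ3 x a b : ~ freeB x b -> QHC_axiom (FB (BImp (BAll x (BImp b a)) (BImp b (BAll x a))))
  | ABQ4 x a b : ~ freeB x b -> QHC_axiom (FB (BImp (BAll x (BImp a b)) (BImp (BEx x a) b)))
  | AC1 p : QHC_axiom (FP (PImp (PQ (BBang p)) p))
  | AC2 a : QHC_axiom (FB (BImp a (BBang (PQ a))))
  | AC3 p q : QHC_axiom (FB (BImp (BBang (PImp p q)) (BImp (BBang p) (BBang q))))
  | AC4 a b : QHC_axiom (FP (PImp (PQ (BImp a b)) (PImp (PQ a) (PQ b))))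
  | AC5 : QHC_axiom (FB (BImp (BBang PZero) BBot))
  | AC6 a b : QHC_axiom (FP (PIff (PQ (BAnd a b)) (PAnd (PQ a) (PQ b))))
  | AC7 a b : QHC_axiom (FP (PIff (PQ (BOr a b)) (POr (PQ a) (PQ b))))
  | AC8 : QHC_axiom (FP (PImp (PQ BBot) PZero))
  | AC9 x a : QHC_axiom (FP (PIff (PQ (BEx x a)) (PEx x (PQ a))))
  | AC10 x a : QHC_axiom (FP (PImp (PQ (BAll x a)) (PAll x (PQ a)))).

(* Derivability in QHC extended by extra axioms [Ax] and extra unary
   rules [Ru] (Ru f g : from premise f infer g). *)
Inductive Der (Ax : fm -> Prop) (Ru : fm -> fm -> Prop) : fm -> Prop :=
  | DAx f : QHC_axiom f -> Der Ax Ru f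
  | DExtra f : Ax f -> Der Ax Ru f
  | DRule f g : Ru f g -> Der Ax Ru f -> Der Ax Ru g
  | DMPP p q : Der Ax Ru (FP (PImp p q)) -> Der Ax Ru (FP p) -> Der Ax Ru (FP q)
  | DMPB a b : Der Ax Ru (FB (BImp a b)) -> Der Ax Ru (FB a) -> Der Ax Ru (FB b)
  | DGenP x p : Der Ax Ru (FP p) -> Der Ax Ru (FP (PAll x p))
  | DGenB x a : Der Ax Ru (FB a) -> Der Ax Ru (FB (BAll x a))
  | DBang p : Der Ax Ru (FP p) -> Der Ax Ru (FB (BBang p))
  | DQues a : Der Ax Ru (FB a) -> Der Ax Ru (FP (PQ a)).

Definition NoAx : fm -> Prop := fun _ => False.
Definition NoRule : fm -> fm -> Prop := fun _ _ => False.
Definition AxUnion (X Y : fm -> Prop) : fm -> Prop := fun f => X f \/ Y f.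

Definition D_nabla : fm -> Prop :=
  fun f => exists a, f = FB (BOr (Nab a) (BNeg (Nab a))).
Definition WEM : fm -> Prop :=
  fun f => exists a, f = FB (BOr (BNeg a) (BNeg (BNeg a))).
Definition D_prop : fm -> Prop :=
  fun f => exists p, f = FB (BOr (BBang p) (BBang (PNeg p))).
Definition NoIgnorabimus : fm -> Prop :=
  fun f => exists g, f = FP (PQ (BOr g (BNeg g))).
Definition Stability : fm -> Prop :=
  fun f => exists p, f = FB (BImp (BNeg (BBang (PNeg p))) (BBang p)).
Definition EDR : fm -> fm -> Prop :=
  fun f g => exists a b, f = FB (BNeg (BAnd a b)) /\
                         g = FB (BImp (Nab (BOr a b)) (BOr (Nab a) (Nab b))).

Definition schema_derivable (Ax : fm -> Prop) (Ru : fm -> fm -> Prop)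
  (Y : fm -> Prop) : Prop := forall f, Y f -> Der Ax Ru f.

Definition rule_derivable (Ax : fm -> Prop) (Ru : fm -> fm -> Prop)
  (R : fm -> fm -> Prop) : Prop :=
  forall f g, R f g -> Der (fun h => Ax h \/ h = f) Ru g.

(* Main.v *)
Require Import Defs.
From Stdlib Require Import List.
Import ListNotations.

Inductive BD (Ax : fm -> Prop) (Ru : fm -> fm -> Prop) (G : list prb) : prb -> Prop :=
| bhyp a : In a G -> BD Ax Ru G a
| bder a : Der Ax Ru (FB a) -> BD Ax Ru G a
| bmp a b : BD Ax Ru G (BImp a b) -> BD Ax Ru G a -> BD Ax Ru G b.

Arguments bhyp {Ax Ru G a}.
Arguments bder {Ax Ru G a}.
Arguments bmp {Ax Ru G a b}.

Ltac hyp := apply bhyp; simpl; tauto.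
Ltac ax c := apply bder; apply DAx; exact c.

Lemma bid Ax Ru a : Der Ax Ru (FB (BImp a a)).
Proof.
  eapply DMPB. eapply DMPB. apply DAx, (AB2 a (BImp a a) a).
  apply DAx, AB1. apply DAx, AB1.
Qed.

Lemma bded Ax Ru G a b : BD Ax Ru (a::G) b -> BD Ax Ru G (BImp a b).
Proof.
  intro H; induction H.
  - destruct H as [<-|H]. apply bder, bid.
    eapply bmp. ax (AB1 a0 a). apply bhyp; exact H.
  - eapply bmp. ax (AB1 a0 a). apply bder; exact H.
  - eapply bmp. eapply bmp. ax (AB2 a a0 b). exact IHBD1. exact IHBD2.
Qed.

Lemma bclose Ax Ru a : BD Ax Ru [] a -> Der Ax Ru (FB a).
Proof.
  intro H; induction H. destruct H. exact H. eapply DMPB; eauto.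
Qed.

Lemma bor Ax Ru G a b c : BD Ax Ru G (BOr a b) -> BD Ax Ru (a::G) c ->
  BD Ax Ru (b::G) c -> BD Ax Ru G c.
Proof.
  intros H H1 H2. eapply bmp. eapply bmp. eapply bmp. ax (AB8 a b c).
  apply bded; exact H1. apply bded; exact H2. exact H.
Qed.

Lemma bl Ax Ru G a b : BD Ax Ru G a -> BD Ax Ru G (BOr a b).
Proof. intro H. eapply bmp. ax (AB6 a b). exact H. Qed.
Lemma br Ax Ru G a b : BD Ax Ru G b -> BD Ax Ru G (BOr a b).
Proof. intro H. eapply bmp. ax (AB7 a b). exact H. Qed.
Lemma bexf Ax Ru G a : BD Ax Ru G BBot -> BD Ax Ru G a.
Proof. intro H. eapply bmp. ax (AB9 a). exact H. Qed.

Lemma nab_K Ax Ru a b : Der Ax Ru (FB (BImp (Nab (BImp a b)) (BImp (Nab a) (Nab b)))).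
Proof.
  apply bclose. apply bded, bded.
  eapply bmp. eapply bmp. ax (AC3 (PQ a) (PQ b)).
  eapply bmp. eapply bmp. ax (AC3 (PQ (BImp a b)) (PImp (PQ a) (PQ b))).
  apply bder, DBang, DAx, AC4. hyp. hyp.
Qed.

Lemma nab_bot Ax Ru : Der Ax Ru (FB (BImp (Nab BBot) BBot)).
Proof.
  apply bclose. apply bded. eapply bmp. ax AC5.
  eapply bmp. eapply bmp. ax (AC3 (PQ BBot) PZero).
  apply bder, DBang, DAx, AC8. hyp.
Qed.

Lemma nab_bang Ax Ru p : Der Ax Ru (FB (BImp (Nab (BBang p)) (BBang p))).
Proof.
  apply bclose. apply bded.
  eapply bmp. eapply bmp. ax (AC3 (PQ (BBang p)) p).
  apply bder, DBang, DAx, AC1. hyp.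
Qed.

Lemma bang_bot Ax Ru G p : BD Ax Ru G (BBang p) -> BD Ax Ru G (BBang (PNeg p)) ->
  BD Ax Ru G BBot.
Proof.
  intros H1 H2. eapply bmp. ax AC5. eapply bmp. eapply bmp. ax (AC3 p PZero).
  exact H2. exact H1.
Qed.

Lemma nab_mp Ax Ru G a b : BD Ax Ru G (BImp a b) -> BD Ax Ru G (Nab a) -> BD Ax Ru G (Nab b).
Proof.
  intros H1 H2. eapply bmp. eapply bmp. apply bder, nab_K.
  eapply bmp. ax (AC2 (BImp a b)). exact H1. exact H2.
Qed.

Lemma nab_neg Ax Ru G a : BD Ax Ru G (Nab (BNeg a)) -> BD Ax Ru G (Nab a) -> BD Ax Ru G BBot.
Proof.
  intros H1 H2. eapply bmp. apply bder, nab_bot.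
  eapply bmp. eapply bmp. apply bder, nab_K. exact H1. exact H2.
Qed.

Lemma part_a Ax Ru : (forall a, Der Ax Ru (FB (BOr (Nab a) (BNeg (Nab a))))) ->
  forall a, Der Ax Ru (FB (BOr (BNeg a) (BNeg (BNeg a)))).
Proof.
  intros HD a. apply bclose. eapply bor. apply bder, HD.
  - apply br. apply bded. eapply nab_neg. eapply bmp. ax (AC2 (BNeg a)). hyp. hyp.
  - apply bl. apply bded. eapply bmp. hyp. eapply bmp. ax (AC2 a). hyp.
Qed.

Lemma part_b Ax Ru a b : (forall a, Der Ax Ru (FB (BOr (BNeg a) (BNeg (BNeg a))))) ->
  Der Ax Ru (FB (BNeg (BAnd a b))) ->
  Der Ax Ru (FB (BImp (Nab (BOr a b)) (BOr (Nab a) (Nab b)))).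
Proof.
  intros HW HP. apply bclose. apply bded. eapply bor. apply bder, HW.
  - apply br. eapply nab_mp. 2: hyp. apply bded. eapply bor. hyp.
    + apply bexf. eapply bmp. hyp. hyp.
    + hyp.
  - apply bl. eapply nab_mp. 2: hyp. apply bded. eapply bor. hyp.
    + hyp.
    + apply bexf. eapply bmp. hyp. apply bded. eapply bmp. apply bder, HP.
      eapply bmp. eapply bmp. ax (AB5 a b). hyp. hyp.
Qed.

Lemma pcomp Ax Ru A B C : Der Ax Ru (FP (PImp A B)) -> Der Ax Ru (FP (PImp B C)) ->
  Der Ax Ru (FP (PImp A C)).
Proof.
  intros H1 H2. eapply DMPP. eapply DMPP. apply DAx, (AP2 A B C).
  eapply DMPP. apply DAx, AP1. exact H2. exact H1.
Qed.

Lemma qmono Ax Ru a b : Der Ax Ru (FB (BImp a b)) -> Der Ax Ru (FP (PImp (PQ a) (PQ b))).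
Proof. intro H. eapply DMPP. apply DAx, AC4. apply DQues, H. Qed.

Lemma part_c1 Ax Ru : (forall a, Der Ax Ru (FB (BOr (Nab a) (BNeg (Nab a))))) ->
  forall g, Der Ax Ru (FP (PQ (BOr g (BNeg g)))).
Proof.
  intros HD g. eapply DMPP. eapply DMPP. eapply DMPP.
  apply DAx, (AP8 (PQ (Nab g)) (PQ (BNeg (Nab g))) (PQ (BOr g (BNeg g)))).
  - eapply pcomp. apply DAx, (AC1 (PQ g)). apply qmono, DAx, AB6.
  - apply qmono. apply bclose. apply bded. apply br. apply bded.
    eapply bmp. hyp. eapply bmp. ax (AC2 g). hyp.
  - eapply DMPP. eapply DMPP. apply DAx, AP3. apply DAx, AC7. apply DQues, HD.
Qed.

Lemma part_c3 Ax Ru : (forall g, Der Ax Ru (FP (PQ (BOr g (BNeg g))))) ->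
  (forall a b, Ru (FB (BNeg (BAnd a b))) (FB (BImp (Nab (BOr a b)) (BOr (Nab a) (Nab b))))) ->
  forall a, Der Ax Ru (FB (BOr (Nab a) (BNeg (Nab a)))).
Proof.
  intros HN HR a.
  assert (HE : Der Ax Ru (FB (BImp (Nab (BOr a (BNeg a))) (BOr (Nab a) (Nab (BNeg a)))))).
  { eapply DRule. apply HR. apply bclose. apply bded. eapply bmp.
    eapply bmp. ax (AB4 a (BNeg a)). hyp. eapply bmp. ax (AB3 a (BNeg a)). hyp. }
  apply bclose. eapply bor. eapply bmp. apply bder, HE. apply bder, DBang, HN.
  - apply bl. hyp.
  - apply br. apply bded. eapply nab_neg; hyp.
Qed.

Lemma part_d1 Ax Ru : (forall p, Der Ax Ru (FB (BOr (BBang p) (BBang (PNeg p))))) ->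
  forall p, Der Ax Ru (FB (BImp (BNeg (BBang (PNeg p))) (BBang p))).
Proof.
  intros HD p. apply bclose. apply bded. eapply bor. apply bder, HD.
  hyp. apply bexf. eapply bmp; hyp.
Qed.

Lemma dprop_dnab Ax Ru : (forall p, Der Ax Ru (FB (BOr (BBang p) (BBang (PNeg p))))) ->
  forall a, Der Ax Ru (FB (BOr (Nab a) (BNeg (Nab a)))).
Proof.
  intros HD a. apply bclose. eapply bor. apply bder, (HD (PQ a)).
  apply bl; hyp. apply br. apply bded. eapply bang_bot; hyp.
Qed.

Lemma stab_nn Ax Ru : (forall p, Der Ax Ru (FB (BImp (BNeg (BBang (PNeg p))) (BBang p)))) ->
  forall g, Der Ax Ru (FB (BImp (BNeg (BNeg g)) (Nab g))).
Proof.
  intros HS g. apply bclose. apply bded. eapply bmp. apply bder, (HS (PQ g)).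
  apply bded. eapply bmp. hyp. apply bded. eapply bang_bot. 2: hyp.
  eapply bmp. ax (AC2 g). hyp.
Qed.

Lemma part_d3 Ax Ru : (forall p, Der Ax Ru (FB (BImp (BNeg (BBang (PNeg p))) (BBang p)))) ->
  (forall a b, Ru (FB (BNeg (BAnd a b))) (FB (BImp (Nab (BOr a b)) (BOr (Nab a) (Nab b))))) ->
  forall p, Der Ax Ru (FB (BOr (BBang p) (BBang (PNeg p)))).
Proof.
  intros HS HR p.
  assert (HE : Der Ax Ru (FB (BImp (Nab (BOr (BBang p) (BBang (PNeg p))))
                 (BOr (Nab (BBang p)) (Nab (BBang (PNeg p))))))).
  { eapply DRule. apply HR. apply bclose. apply bded. eapply bang_bot.
    eapply bmp. ax (AB3 (BBang p) (BBang (PNeg p))). hyp.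
    eapply bmp. ax (AB4 (BBang p) (BBang (PNeg p))). hyp. }
  apply bclose. eapply bor. eapply bmp. apply bder, HE.
  - eapply bmp. apply bder, stab_nn, HS. apply bded.
    eapply bmp. hyp. apply bl. eapply bmp. apply bder, HS. apply bded.
    eapply bmp. hyp. apply br. hyp.
  - apply bl. eapply bmp. apply bder, nab_bang. hyp.
  - apply br. eapply bmp. apply bder, nab_bang. hyp.
Qed.

Theorem proposition2p29 :
  (* (a) D_nabla implies WEM *)
  schema_derivable D_nabla NoRule WEM /\
  (* (b) WEM implies that EDR is derivable *)
  rule_derivable WEM NoRule EDR /\
  (* (c) D_nabla <-> No Ignorabimus + EDR *)
  (schema_derivable D_nabla NoRule NoIgnorabimus /\
   rule_derivable D_nabla NoRule EDR /\
   schema_derivable NoIgnorabimus EDR D_nabla) /\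
  (* (d) D_prop <-> Stability + EDR *)
  (schema_derivable D_prop NoRule Stability /\
   rule_derivable D_prop NoRule EDR /\
   schema_derivable Stability EDR D_prop).
Proof.
  assert (HR : forall a b, EDR (FB (BNeg (BAnd a b))) (FB (BImp (Nab (BOr a b)) (BOr (Nab a) (Nab b))))).
  { intros a b. exists a, b. split; reflexivity. }
  split; [|split; [|split; split]].
  - intros f [a ->]. apply part_a. intro b. apply DExtra. exists b. reflexivity.
  - intros f g [a [b [-> ->]]]. apply part_b.
    + intro c. apply DExtra. left. exists c. reflexivity.
    + apply DExtra. right. reflexivity.
  - intros f [g ->]. apply part_c1. intro b. apply DExtra. exists b. reflexivity.
  - split.
    + intros f g [a [b [-> ->]]]. apply part_b.
      * apply part_a. intro c. apply DExtra. left. exists c. reflexivity.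
      * apply DExtra. right. reflexivity.
    + intros f [a ->]. apply part_c3; [|exact HR].
      intro g. apply DExtra. exists g. reflexivity.
  - intros f [p ->]. apply part_d1. intro q. apply DExtra. exists q. reflexivity.
  - split.
    + intros f g [a [b [-> ->]]]. apply part_b.
      * apply part_a. apply dprop_dnab. intro c. apply DExtra. left. exists c. reflexivity.
      * apply DExtra. right. reflexivity.
    + intros f [p ->]. apply part_d3; [|exact HR].
      intro q. apply DExtra. exists q. reflexivity.
Qed.
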